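(* Let $\mathcal{G}=(\mathcal{V},\mathcal{A})$ be the information-flow graph of a single-sender single-uniprior index-coding instance with message lengths $q_1,\dots,q_n$. Then \[ \ell^*(\mathcal{G}) \geq \max_{\mathcal{G}'=(\mathcal{V},\mathcal{A}'):\ \mathcal{A}'\subseteq\mathcal{A}} \ \sum_{i:\ i \text{ is a predecessor of some vertex in } \mathcal{L}(\mathcal{G}')} q_i . \]
   Context: Single-sender single-uniprior index coding: there are $n$ receivers and $n$ independent messages $x_1,\dots,x_n$; message $x_i$ consists of $q_i\ge 1$ bits, each independently uniformly distributed on $\{0,1\}$. A single sender knows all messages. Receiver $i$ knows $x_i$ a priori and requests a set $\mathcal{W}_i$ of messages with $x_i\notin\mathcal{W}_i$. The information-flow graph is the directed graph $\mathcal{G}=(\mathcal{V},\mathcal{A})$ with $\mathcal{V}=\{1,\dots,n\}$ and an arc $(j\to i)\in\mathcal{A}$ iff $x_j\in\mathcal{W}_i$. An index code of length $\ell$ consists of an encoding function $E:\{0,1\}^{\sum_i q_i}\to\{0,1\}^\ell$ and, for each receiver $i$, a decoding function $D_i$ such that $D_i(E(x_1,\dots,x_n),x_i)$ equals the tuple of messages in $\mathcal{W}_i$ for all values of the messages. $\ell^*(\mathcal{G})$ denotes the minimum length of an index code. For a directed graph $\mathcal{H}$, a leaf vertex is a vertex with no outgoing arcs and $\mathcal{L}(\mathcal{H})$ is the set of leaf vertices of $\mathcal{H}$. A vertex $j$ is a predecessor of vertex $i$ in $\mathcal{H}$ iff there is a directed path in $\mathcal{H}$ from $j$ to $i$. 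*)

(* Defs.v *)
From mathcomp Require Import all_boot.
Set Implicit Arguments. Unset Strict Implicit. Unset Printing Implicit Defensive.

(* Vertices are 'I_n; message x_i is a (q i)-bit string; the information-flow
   graph is given by its arc relation A : rel 'I_n, with A j i meaning
   (j -> i) is an arc, i.e. receiver i requests x_j. *)

Definition msgs (n : nat) (q : 'I_n -> nat) := forall i : 'I_n, (q i).-tuple bool.

Definition is_index_code (n : nat) (q : 'I_n -> nat) (A : rel 'I_n) (l : nat)
  (E : msgs q -> l.-tuple bool)
  (D : forall i : 'I_n, l.-tuple bool -> (q i).-tuple bool ->
         forall j : 'I_n, A j i -> (q j).-tuple bool) : Prop :=
  forall (x : msgs q) (i j : 'I_n) (hji : A j i), D i (E x) (x i) j hji = x j.

Definition has_index_code (n : nat) (q : 'I_n -> nat) (A : rel 'I_n) (l : nat) : Prop :=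
  exists E D, @is_index_code n q A l E D.

(* ell_star(G) >= b  is expressed as: every index code for G has length >= b. *)

Definition is_leaf (n : nat) (A' : rel 'I_n) (i : 'I_n) : bool :=
  [forall k, ~~ A' i k].

Definition is_pred (n : nat) (A' : rel 'I_n) (j i : 'I_n) : bool :=
  [exists k, A' j k && connect A' k i].

Definition pred_of_leaves (n : nat) (A' : rel 'I_n) : {set 'I_n} :=
  [set j | [exists i, is_leaf A' i && is_pred A' j i]].

(* Main.v *)
Require Import Defs.
From mathcomp Require Import all_boot.
Set Implicit Arguments. Unset Strict Implicit. Unset Printing Implicit Defensive.

Section L.
Variables (n : nat) (q : 'I_n -> nat) (A : rel 'I_n) (A' : rel 'I_n).
Hypothesis hsub : forall j i, A' j i -> A j i.
Variables (l : nat) (E : msgs q -> l.-tuple bool)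
  (D : forall i : 'I_n, l.-tuple bool -> (q i).-tuple bool ->
         forall j : 'I_n, A j i -> (q j).-tuple bool).
Hypothesis hc : is_index_code E D.

Lemma leaf_notP i : is_leaf A' i -> i \notin pred_of_leaves A'.
Proof.
move=> /forallP hl; rewrite inE; apply/negP => /existsP[i' /andP[_ /existsP[k /andP[hk _]]]].
by move: (hl k); rewrite hk.
Qed.

Lemma main_inj (x y : msgs q) : E x = E y ->
  (forall j, j \notin pred_of_leaves A' -> x j = y j) -> forall j, x j = y j.
Proof.
move=> hE hout.
have step : forall k k', A' k k' -> x k' = y k' -> x k = y k.
  move=> k k' h h'.
  by rewrite -(@hc x k' k (hsub h)) -(@hc y k' k (hsub h)) hE h'.
have hconn : forall i, is_leaf A' i -> forall k, connect A' k i -> x k = y k.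
  move=> i hl k /connectP[p hp hi].
  elim: p k hp hi => [|k' p IH] k /=.
    by move=> _ <-; apply: hout; apply: leaf_notP.
  by move=> /andP[hk hp] hi; apply: (step _ k' hk); apply: IH.
move=> j; case hj: (j \in pred_of_leaves A'); last by apply: hout; rewrite hj.
move: hj; rewrite inE => /existsP[i /andP[hl /existsP[k /andP[hk hki]]]].
by apply: (step _ k hk); apply: (hconn i hl).
Qed.
End L.

Section Count.
Variables (n : nat) (q : 'I_n -> nat) (P : {set 'I_n}).
Definition mq (j : 'I_n) := if j \in P then q j else 0.
Definition K := {j : 'I_n & 'I_(mq j)}.

Lemma card_K : #|{: K}| = \sum_(j in P) q j.
Proof.
rewrite card_tagged sumnE big_map big_enum /=.
by rewrite [RHS]big_mkcond; apply: eq_bigr => j _; rewrite card_ord.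
Qed.

Definition xf (f : {ffun K -> bool}) : msgs q := fun j =>
  [tuple match @insub _ (fun k => k < mq j) _ (nat_of_ord k) with
         | Some k' => f (Tagged (fun j => 'I_(mq j)) k') | None => false end | k < q j].

Lemma xf_inj (f g : {ffun K -> bool}) : (forall j, xf f j = xf g j) -> f = g.
Proof.
move=> h; apply/ffunP => -[j k].
have hk : (nat_of_ord k) < mq j := ltn_ord k.
have hm : 0 < mq j by apply: leq_ltn_trans hk.
have jP : j \in P by move: hm; rewrite /mq; case: ifP.
have hmq : mq j = q j by rewrite /mq jP.
have hkq : (nat_of_ord k) < q j by rewrite -hmq.
move: (congr1 (fun t => tnth t (Ordinal hkq)) (h j)).
rewrite /xf !tnth_mktuple /=.
by rewrite (valK k).
Qed.

Lemma xf_out (f g : {ffun K -> bool}) j : j \notin P -> xf f j = xf g j.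
Proof.
move=> hj; rewrite /xf; apply: eq_mktuple => k.
case: insubP => // k' _ _; exfalso.
have := ltn_ord k'; rewrite {2}/mq (negbTE hj).
by [].
Qed.
End Count.

Theorem lemma5 (n : nat) (q : 'I_n -> nat) (A : rel 'I_n)
  (hq : forall i, 0 < q i)
  (hirr : forall i, ~~ A i i)
  (A' : rel 'I_n) (hsub : forall j i, A' j i -> A j i)
  (l : nat) (hcode : has_index_code q A l) :
  \sum_(j in pred_of_leaves A') q j <= l.
Proof.
case: hcode => E [D hc].
set P := pred_of_leaves A'.
have inj : injective (fun f : {ffun K q P -> bool} => E (xf f)).
  move=> f g hE; apply: xf_inj => j.
  apply: (main_inj hsub hc hE) => j' hj'.
  exact: xf_out.
have := @leq_card _ _ _ inj.
rewrite card_ffun card_tuple card_bool card_K leq_exp2l //.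
Qed.
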